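(* Let $b_{10}>0$, $b_{11}\ge0$, $c_{01}\ge0$, $c_{11}\ge0$, and define $\gamma'=\frac{c_{01}}{b_{10}}$, $\delta'=\frac{b_{10}-b_{11}+c_{11}-c_{01}}{b_{10}}$. Let $\mathcal{F}=\{(P_{11},t): P_{11}\in[0,1],\ P_{11}-1\le t\le P_{11}\}$ and $\mathcal{P}=\{(P_{11},t)\in\mathcal{F}: t>\gamma'+\delta'P_{11}\}$. If $c_{11}>b_{11}$, then $\mathcal{P}=\emptyset$.
   Context: Double binary causal classification: $P_{11}$ is the probability of the positive outcome under the positive treatment, $t=P_{11}-P_{10}$ the estimated individual treatment effect, $b_{ij}$ the benefit of outcome $i$ under treatment $j$ and $c_{ij}$ the cost of outcome $i$ under treatment $j$, normalized so that $c_{00}=c_{10}=0$, $b_{00}=b_{01}=0$. The cost-sensitive causal decision boundary is $t=\gamma'+\delta'P_{11}$ and $\mathcal{P}$ is the positive treatment set. *)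

(* Defs.v *)
From mathcomp Require Import all_boot all_order all_algebra.
From mathcomp Require Import boolp classical_sets.
Set Implicit Arguments. Unset Strict Implicit. Unset Printing Implicit Defensive.
Import Order.TTheory GRing.Theory Num.Theory.
Local Open Scope ring_scope.
Local Open Scope classical_set_scope.

Definition gamma' {R : realFieldType} (b10 c01 : R) : R := c01 / b10.

Definition delta' {R : realFieldType} (b10 b11 c01 c11 : R) : R :=
  (b10 - b11 + c11 - c01) / b10.

Definition feasible_set {R : realFieldType} : set (R * R) :=
  [set p | 0 <= p.1 <= 1 /\ p.1 - 1 <= p.2 <= p.1].

Definition positive_set {R : realFieldType} (b10 b11 c01 c11 : R) : set (R * R) :=
  [set p | feasible_set p /\ gamma' b10 c01 + delta' b10 b11 c01 c11 * p.1 < p.2].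

(* Main.v *)
Require Import Defs.
From mathcomp Require Import all_boot all_order all_algebra.
From mathcomp Require Import boolp classical_sets.
From mathcomp Require Import ring lra.
Import Order.TTheory GRing.Theory Num.Theory.
Local Open Scope ring_scope.
Local Open Scope classical_set_scope.

Theorem corollary1 (R : realFieldType) (b10 b11 c01 c11 : R)
  (hb10 : 0 < b10) (hb11 : 0 <= b11) (hc01 : 0 <= c01) (hc11 : 0 <= c11)
  (hcb : b11 < c11) :
  positive_set b10 b11 c01 c11 = set0.
Proof.
apply/seteqP; split; last by [].
move=> -[p t] /= [[/andP[h0 h1] /andP[ht1 ht2]] hlt].
rewrite /= in h0 h1 ht1 ht2 hlt.
move: hlt; rewrite /gamma' /delta'.
have -> : c01 / b10 + (b10 - b11 + c11 - c01) / b10 * p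
  = (c01 + (b10 - b11 + c11 - c01) * p) / b10.
  by field; rewrite gt_eqF.
rewrite ltr_pdivrMr // => H.
have H1 : 0 <= c01 * (1 - p) by apply: mulr_ge0; lra.
have H2 : 0 <= (c11 - b11) * p by apply: mulr_ge0; lra.
have H3 : t * b10 <= p * b10 by rewrite ler_pM2r.
lra.
Qed.
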